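(* For all sufficiently large $n$, there is a nonempty set $\mathcal{A}\subsetneq\{0,1\}^n$ such that every first-order sentence over $\tau_{\mathsf{string}}$ that is true in $\mathbf{B}_w$ for all $w\in\mathcal{A}$ and false in $\mathbf{B}_{w'}$ for all $w'\in\{0,1\}^n\setminus\mathcal{A}$ has at least $n/\log_2 n$ quantifiers.
   Context: Vocabulary $\tau_{\mathsf{string}}=\langle <, S;\ \mathsf{min},\mathsf{max}\rangle$ with $<$ binary, $S$ unary, $\mathsf{min},\mathsf{max}$ constants. A string $w=w_1\cdots w_n\in\{0,1\}^n$ ($n\geq 1$) is encoded by the structure $\mathbf{B}_w$ with universe $\{1,\dots,n\}$, $<$ the usual order, $S=\{i: w_i=1\}$, $\mathsf{min}=1$, $\mathsf{max}=n$. The number of quantifiers is the number of quantifier occurrences. *)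

(* Defs.v *)
From mathcomp Require Import all_boot.
From Stdlib Require Import Reals.

Set Implicit Arguments.
Unset Strict Implicit.
Unset Printing Implicit Defensive.

Inductive term : Type :=
  | TVar : nat -> term
  | TMin : term
  | TMax : term.

Inductive formula : Type :=
  | FEq  : term -> term -> formula
  | FLt  : term -> term -> formula
  | FS   : term -> formula
  | FNot : formula -> formula
  | FAnd : formula -> formula -> formula
  | FOr  : formula -> formula -> formula
  | FEx  : nat -> formula -> formula
  | FAll : nat -> formula -> formula.

Fixpoint nquant (phi : formula) : nat :=
  match phi with
  | FEq _ _ | FLt _ _ | FS _ => 0
  | FNot p => nquant p
  | FAnd p q | FOr p q => nquant p + nquant q
  | FEx _ p | FAll _ p => (nquant p).+1
  end.

Definition tvars (t : term) : seq nat :=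
  match t with TVar x => [:: x] | _ => [::] end.

Fixpoint fv (phi : formula) : seq nat :=
  match phi with
  | FEq t1 t2 | FLt t1 t2 => tvars t1 ++ tvars t2
  | FS t => tvars t
  | FNot p => fv p
  | FAnd p q | FOr p q => fv p ++ fv q
  | FEx x p | FAll x p => filter (fun y => y != x) (fv p)
  end.

Definition sentence (phi : formula) : Prop := fv phi = [::].

(* The structure B_w for w = w_1 ... w_n in {0,1}^n (w : n.-tuple bool,
   w_i = nth false w (i-1)): universe {1,...,n}, usual order,
   S = {i | w_i = 1}, min = 1, max = n. *)
Section Semantics.
Variables (n : nat) (w : n.-tuple bool).

Definition teval (a : nat -> nat) (t : term) : nat :=
  match t with
  | TVar x => a x
  | TMin => 1
  | TMax => n
  end.

Definition upd (a : nat -> nat) (x v : nat) : nat -> nat :=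
  fun y => if y == x then v else a y.

Fixpoint sat (a : nat -> nat) (phi : formula) : Prop :=
  match phi with
  | FEq t1 t2 => teval a t1 = teval a t2
  | FLt t1 t2 => teval a t1 < teval a t2
  | FS t => nth false w (teval a t).-1 = true
  | FNot p => ~ sat a p
  | FAnd p q => sat a p /\ sat a q
  | FOr p q => sat a p \/ sat a q
  | FEx x p => exists v, 1 <= v <= n /\ sat (upd a x v) p
  | FAll x p => forall v, 1 <= v <= n -> sat (upd a x v) p
  end.

(* Truth of a sentence in B_w (the assignment is irrelevant for sentences;
   we fix the assignment sending every variable to 1 = min). *)
Definition holds (phi : formula) : Prop := sat (fun _ => 1) phi.

End Semantics.

Definition defines (n : nat) (A : {set n.-tuple bool}) (phi : formula) : Prop :=
  sentence phi /\
  (forall w : n.-tuple bool, w \in A -> holds w phi) /\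
  (forall w : n.-tuple bool, w \notin A -> ~ holds w phi).

Definition log2R (x : R) : R := (ln x / ln 2)%R.

(* Main.v *)
Require Import Defs.
From mathcomp Require Import all_boot.
From mathcomp Require Import zify.
From Stdlib Require Import Classical FunctionalExtensionality.

Set Implicit Arguments.
Unset Strict Implicit.
Unset Printing Implicit Defensive.

Section Sem.
Variable n : nat.
Notation X := (n.-tuple bool * seq nat)%type.

Fixpoint satb (w : n.-tuple bool) (a : nat -> nat) (phi : formula) : bool :=
  match phi with
  | FEq t1 t2 => teval n a t1 == teval n a t2
  | FLt t1 t2 => teval n a t1 < teval n a t2
  | FS t => nth false w (teval n a t).-1
  | FNot p => ~~ satb w a p
  | FAnd p q => satb w a p && satb w a q
  | FOr p q => satb w a p || satb w a q
  | FEx x p => has (fun v => satb w (upd a x v) p) (iota 1 n)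
  | FAll x p => all (fun v => satb w (upd a x v) p) (iota 1 n)
  end.

Lemma satP w phi : forall a, sat w a phi <-> satb w a phi.
Proof.
elim: phi.
- by move=> t1 t2 a /=; split => [->|/eqP].
- by move=> t1 t2 a /=.
- by move=> t a /=.
- by move=> p IH a /=; rewrite IH; split => [/negP|/negP].
- by move=> p IHp q IHq a /=; rewrite IHp IHq; split => [[-> ->]|/andP].
- by move=> p IHp q IHq a /=; rewrite IHp IHq; split => [[->|->]|/orP]; rewrite ?orbT.
- move=> x p IH a /=; split.
  + move=> [v [Hv /IH Hs]]; apply/hasP; exists v => //; rewrite mem_iota; lia.
  + move/hasP=> [v]; rewrite mem_iota => Hv /IH Hs; exists v; split => //; lia.
- move=> x p IH a /=; split.
  + move=> H; apply/allP => v; rewrite mem_iota => Hv; apply/IH; apply: H; lia.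
  + move/allP=> H v Hv; apply/IH; apply: H; rewrite mem_iota; lia.
Qed.

Fixpoint env (ctx vals : seq nat) : nat -> nat :=
  match ctx with
  | [::] => fun _ => 1
  | x :: c => upd (env c (behead vals)) x (head 1 vals)
  end.

Definition den (ctx : seq nat) (phi : formula) : X -> bool :=
  fun x => satb x.1 (env ctx x.2) phi.

Fixpoint sv (k : nat) (vals : seq nat) : seq nat :=
  match k with
  | 0 => [:: 1; n]
  | k'.+1 => head 1 vals :: sv k' (behead vals)
  end.

Lemma size_sv k vals : size (sv k vals) = k.+2.
Proof. by elim: k vals => //= k IH vals; rewrite IH. Qed.

Lemma sv_min k vals : nth 0 (sv k vals) k = 1.
Proof. by elim: k vals => //= k IH vals. Qed.

Lemma sv_max k vals : nth 0 (sv k vals) k.+1 = n.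
Proof. by elim: k vals => //= k IH vals. Qed.

Lemma env_nth ctx vals y : env ctx vals y = nth 0 (sv (size ctx) vals) (index y ctx).
Proof.
elim: ctx vals => //= x c IH vals.
rewrite /upd eq_sym; case: (x == y) => //=; exact: IH.
Qed.

Definition slot (ctx : seq nat) (t : term) : nat :=
  match t with
  | TVar y => index y ctx
  | TMin => size ctx
  | TMax => (size ctx).+1
  end.

Lemma slot_lt ctx t : slot ctx t < (size ctx).+2.
Proof. case: t => //= y; apply: (leq_ltn_trans (index_size y ctx)); exact: leqnSn. Qed.

Lemma teval_slot ctx vals t :
  teval n (env ctx vals) t = nth 0 (sv (size ctx) vals) (slot ctx t).
Proof. case: t => [y||] /=; [exact: env_nth | by rewrite sv_min | by rewrite sv_max]. Qed.

End Sem.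
Section Key.
Variable n : nat.
Notation X := (n.-tuple bool * seq nat)%type.

Lemma count_strict (p p' : pred nat) s z :
  subpred p p' -> z \in s -> p' z -> ~~ p z -> count p s < count p' s.
Proof.
move=> Hpp'; elim: s => //= y s IH; rewrite inE => /orP [/eqP <-|Hz] Hp' Hnp.
  rewrite Hp' (negbTE Hnp) /= add0n add1n ltnS; exact: sub_count.
have := IH Hz Hp' Hnp; case Hy: (p y); first by rewrite (Hpp' _ Hy) /=; lia.
have := leq_b1 (p' y); lia.
Qed.

Definition rank (L : seq nat) (v : nat) := count (fun u => u < v) (undup L).

Lemma rank_lt L u v : u \in L -> u < v -> rank L u < rank L v.
Proof.
move=> Hu Huv; apply: (count_strict (z := u)) => //=.
- move=> z /= Hz; exact: ltn_trans Hz Huv.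
- by rewrite mem_undup.
- by rewrite ltnn.
Qed.

Lemma rank_ltsize L v : v \in L -> rank L v < size L.
Proof.
move=> Hv; apply: (leq_trans (n := size (undup L))); last exact: size_undup.
rewrite -count_predT; apply: (count_strict (z := v)) => //=.
- by rewrite mem_undup.
- by rewrite ltnn.
Qed.

Lemma rank_ltE L u v : u \in L -> v \in L -> (u < v) = (rank L u < rank L v).
Proof.
move=> Hu Hv; case: (ltngtP u v) => H.
- by rewrite (rank_lt Hu H).
- by have := rank_lt Hv H; lia.
- by rewrite H ltnn.
Qed.

Lemma rank_eqE L u v : u \in L -> v \in L -> (u == v) = (rank L u == rank L v).
Proof.
move=> Hu Hv; case: (ltngtP u v) => H.
- by have := rank_lt Hu H; lia.
- by have := rank_lt Hv H; lia.
- by rewrite H !eqxx.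
Qed.

Definition dg (w : n.-tuple bool) (L : seq nat) (s : nat) : nat :=
  (rank L (nth 0 L s)).*2 + nth false w (nth 0 L s).-1.

Definition enc (M : nat) (ds : seq nat) : nat := foldr (fun d a => d + M * a) 0 ds.

Lemma enc_lt M ds : all (fun d => d < M) ds -> enc M ds < M ^ (size ds).
Proof.
elim: ds => //= d ds IH /andP [Hd Hds]; have := IH Hds; rewrite expnS; nia.
Qed.

Lemma enc_inj M ds1 : forall ds2, size ds1 = size ds2 ->
  all (fun d => d < M) ds1 -> all (fun d => d < M) ds2 -> enc M ds1 = enc M ds2 -> ds1 = ds2.
Proof.
elim: ds1 => [|d1 ds1 IH] [|d2 ds2] //= [Hs] /andP [H1 H1s] /andP [H2 H2s] He.
have Hm : d1 = d2.
  have : (enc M ds1 * M + d1) %% M = (enc M ds2 * M + d2) %% M.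
    by rewrite addnC mulnC He addnC mulnC.
  rewrite !modnMDl !modn_small //.
have Hq : enc M ds1 = enc M ds2.
  have Mpos : 0 < M by lia.
  have : (enc M ds1 * M + d1) %/ M = (enc M ds2 * M + d2) %/ M.
    by rewrite addnC mulnC He addnC mulnC.
  rewrite !divnMDl // !divn_small //; lia.
by rewrite Hm (IH ds2).
Qed.

Definition Mk (k : nat) := (k.+2).*2.
Definition Tk (k : nat) := Mk k ^ k.+2.

Definition key (k : nat) (x : X) : nat := enc (Mk k) (mkseq (dg x.1 (sv n k x.2)) k.+2).

Lemma dg_lt k x s : s < k.+2 -> dg x.1 (sv n k x.2) s < Mk k.
Proof.
move=> Hs; rewrite /dg /Mk.
have : rank (sv n k x.2) (nth 0 (sv n k x.2) s) < k.+2.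
  have E := size_sv n k x.2.
  have := @rank_ltsize (sv n k x.2) (nth 0 (sv n k x.2) s); rewrite E; apply.
  by apply: mem_nth; rewrite E.
have := leq_b1 (nth false x.1 (nth 0 (sv n k x.2) s).-1); lia.
Qed.

Lemma all_dg k x : all (fun d => d < Mk k) (mkseq (dg x.1 (sv n k x.2)) k.+2).
Proof. apply/allP => d /mapP [s]; rewrite mem_iota => Hs ->; apply: dg_lt; lia. Qed.

Lemma key_lt k x : key k x < Tk k.
Proof. by have := enc_lt (all_dg k x); rewrite size_mkseq. Qed.

Lemma key_dg k x y : key k x = key k y -> forall s, s < k.+2 ->
  dg x.1 (sv n k x.2) s = dg y.1 (sv n k y.2) s.
Proof.
move=> H s Hs; have := enc_inj _ (all_dg k x) (all_dg k y) H.
rewrite !size_mkseq => /(_ erefl) E.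
by rewrite -(nth_mkseq 0 (dg x.1 (sv n k x.2)) Hs) E nth_mkseq.
Qed.

Lemma dg_split a (b : bool) c (d : bool) : a.*2 + b = c.*2 + d -> a = c /\ b = d.
Proof. by case: b; case: d => /=; lia. Qed.

Lemma den_atom ctx phi x y :
  (match phi with FEq _ _ | FLt _ _ | FS _ => true | _ => false end) ->
  key (size ctx) x = key (size ctx) y -> den ctx phi x = den ctx phi y.
Proof.
move=> Hphi Hk; have Hd := key_dg Hk.
have memL : forall vs s, s < (size ctx).+2 -> nth 0 (sv n (size ctx) vs) s \in sv n (size ctx) vs.
  by move=> vs s Hs; apply: mem_nth; rewrite size_sv.
case: phi Hphi => // [t1 t2|t1 t2|t] _; rewrite /den /= !teval_slot.
- have [Ha1 _] := dg_split (Hd _ (slot_lt ctx t1)).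
  have [Ha2 _] := dg_split (Hd _ (slot_lt ctx t2)).
  rewrite (rank_eqE (memL x.2 _ (slot_lt ctx t1)) (memL x.2 _ (slot_lt ctx t2))).
  by rewrite (rank_eqE (memL y.2 _ (slot_lt ctx t1)) (memL y.2 _ (slot_lt ctx t2))) Ha1 Ha2.
- have [Ha1 _] := dg_split (Hd _ (slot_lt ctx t1)).
  have [Ha2 _] := dg_split (Hd _ (slot_lt ctx t2)).
  rewrite (rank_ltE (memL x.2 _ (slot_lt ctx t1)) (memL x.2 _ (slot_lt ctx t2))).
  by rewrite (rank_ltE (memL y.2 _ (slot_lt ctx t1)) (memL y.2 _ (slot_lt ctx t2))) Ha1 Ha2.
- by have [_ Hb] := dg_split (Hd _ (slot_lt ctx t)).
Qed.

End Key.

Section Classes.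
Variable n : nat.
Notation X := (n.-tuple bool * seq nat)%type.
Notation key := (key (n:=n)).
Notation den := (den (n:=n)).

Definition qop (b : bool) (h : X -> bool) (x : X) : bool :=
  if b then has (fun z => h (x.1, z :: x.2)) (iota 1 n)
  else all (fun z => h (x.1, z :: x.2)) (iota 1 n).

Definition factors2 (k : nat) (u : X -> seq bool) (h : X -> bool) :=
  forall x y, key k x = key k y -> u x = u y -> h x = h y.

Inductive Vp : nat -> nat -> (X -> seq bool) -> Prop :=
| Vnil k : Vp 0 k (fun _ => [::])
| Vcons k q1 q2 b u h v : Vp q1 k.+1 u -> factors2 k.+1 u h -> Vp q2 k v ->
    Vp (q1 + q2).+1 k (fun x => qop b h x :: v x).

Lemma Vp_size q k v : Vp q k v ->
  (forall x y, size (v x) = size (v y)) /\ (forall x, size (v x) <= q).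
Proof.
elim=> {q k v} // k q1 q2 b u h v _ _ _ _ [H1 H2]; split => /=.
  by move=> x y; rewrite (H1 x y).
by move=> x; have := H2 x; lia.
Qed.

Lemma Vp_cat q1 k v1 : Vp q1 k v1 -> forall q2 v2, Vp q2 k v2 ->
  Vp (q1 + q2) k (fun x => v1 x ++ v2 x).
Proof.
elim=> {q1 k v1} // k q1 q2 b u h v Hu IHu Hh Hv IHv q3 v3 H3.
rewrite addSn -addnA; exact: (Vcons b Hu Hh (IHv _ _ H3)).
Qed.

Definition Dn (q k : nat) (f : X -> bool) :=
  exists q' v, q' <= q /\ Vp q' k v /\ factors2 k v f.

Lemma den_ex ctx y p x :
  den ctx (FEx y p) x = qop true (den (y :: ctx) p) x.
Proof. by []. Qed.

Lemma den_all ctx y p x :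
  den ctx (FAll y p) x = qop false (den (y :: ctx) p) x.
Proof. by []. Qed.

Lemma den_D phi : forall ctx, Dn (nquant phi) (size ctx) (den ctx phi).
Proof.
have atom : forall ctx ps, (match ps with FEq _ _ | FLt _ _ | FS _ => true | _ => false end) ->
    Dn 0 (size ctx) (den ctx ps).
  move=> ctx ps Hphi; exists 0, (fun _ => [::]); split => //; split; first exact: Vnil.
  by move=> x y Hk _; exact: den_atom.
have quant : forall b y p ctx, Dn (nquant p) (size (y :: ctx)) (den (y :: ctx) p) ->
    Dn (nquant p).+1 (size ctx) (fun x => qop b (den (y :: ctx) p) x).
  move=> b y p ctx [q' [u [Hq [Hu Hf]]]].
  exists (q' + 0).+1, (fun x => [:: qop b (den (y :: ctx) p) x]); split; first lia.
  split; first exact: (Vcons b Hu Hf (Vnil _)).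
  by move=> x z _ [].
elim: phi => [t1 t2|t1 t2|t|p IH|p IHp q IHq|p IHp q IHq|y p IH|y p IH] ctx.
- exact: atom.
- exact: atom.
- exact: atom.
- have [q' [v [Hq [Hv Hf]]]] := IH ctx; exists q', v; split => //; split => //.
  by move=> x z Hk Hu; rewrite /den /= -!/(den ctx p x) (Hf x z Hk Hu).
- have [q1 [v1 [Hq1 [Hv1 Hf1]]]] := IHp ctx.
  have [q2 [v2 [Hq2 [Hv2 Hf2]]]] := IHq ctx.
  exists (q1 + q2), (fun x => v1 x ++ v2 x); split; first by rewrite /=; lia.
  split; first exact: Vp_cat.
  move=> x z Hk /eqP; rewrite eqseq_cat; last by case: (Vp_size Hv1) => Hs _; apply: Hs.
  case/andP => /eqP E1 /eqP E2.
  by rewrite /den /= -/(den ctx p x) -/(den ctx q x) (Hf1 x z Hk E1) (Hf2 x z Hk E2).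
- have [q1 [v1 [Hq1 [Hv1 Hf1]]]] := IHp ctx.
  have [q2 [v2 [Hq2 [Hv2 Hf2]]]] := IHq ctx.
  exists (q1 + q2), (fun x => v1 x ++ v2 x); split; first by rewrite /=; lia.
  split; first exact: Vp_cat.
  move=> x z Hk /eqP; rewrite eqseq_cat; last by case: (Vp_size Hv1) => Hs _; apply: Hs.
  case/andP => /eqP E1 /eqP E2.
  by rewrite /den /= -/(den ctx p x) -/(den ctx q x) (Hf1 x z Hk E1) (Hf2 x z Hk E2).
- have := quant true y p ctx (IH (y :: ctx)).
  have -> : den ctx (FEx y p) = (fun x => qop true (den (y :: ctx) p) x) by [].
  by [].
- have := quant false y p ctx (IH (y :: ctx)).
  have -> : den ctx (FAll y p) = (fun x => qop false (den (y :: ctx) p) x) by [].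
  by [].
Qed.

End Classes.

Definition bounded {T : Type} (P : T -> Prop) (B : nat) :=
  exists e : nat -> T, forall x, P x -> exists i, i < B /\ e i = x.

Lemma bnd_or {T} (P Q : T -> Prop) B1 B2 :
  bounded P B1 -> bounded Q B2 -> bounded (fun x => P x \/ Q x) (B1 + B2).
Proof.
move=> [e1 H1] [e2 H2]; exists (fun i => if i < B1 then e1 i else e2 (i - B1)).
move=> x [/H1 [i [Hi <-]] | /H2 [i [Hi <-]]].
  by exists i; rewrite Hi; split => //; lia.
exists (i + B1); split; first lia.
have -> : (i + B1 < B1) = false by lia.
by rewrite addnK.
Qed.

Lemma bnd_img {A B} (P : A -> Prop) (Q : B -> Prop) (F : A -> B) N :
  bounded P N -> (forall y, Q y -> exists x, P x /\ F x = y) -> bounded Q N.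
Proof.
move=> [e H] HQ; exists (fun i => F (e i)) => y /HQ [x [/H [i [Hi <-]] <-]].
by exists i.
Qed.

Lemma bnd_prod {A C} (P : A -> Prop) (Q : C -> Prop) B1 B2 :
  bounded P B1 -> bounded Q B2 -> bounded (fun z => P z.1 /\ Q z.2) (B1 * B2).
Proof.
move=> [e1 H1] [e2 H2]; exists (fun i => (e1 (i %% B1), e2 (i %/ B1))).
move=> [x y] /= [/H1 [i [Hi <-]] /H2 [j [Hj <-]]].
exists (j * B1 + i); split; first nia.
have B1pos : 0 < B1 by lia.
by rewrite modnMDl modn_small // divnMDl // divn_small // addn0.
Qed.

Lemma bnd_bool : bounded (fun _ : bool => True) 2.
Proof. exists odd => b _; exists b; by case: b. Qed.

Section Count.
Variable n : nat.
Notation X := (n.-tuple bool * seq nat)%type.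
Notation key := (key (n:=n)).
Notation Vp := (Vp (n:=n)).
Notation factors2 := (factors2 (n:=n)).
Notation qop := (qop (n:=n)).

Definition VA q k v := exists q', q' <= q /\ Vp q' k v.
Definition HA q k h := exists u, VA q k u /\ factors2 k u h.

Lemma VA_size q k v : VA q k v -> forall x, size (v x) <= q.
Proof. move=> [q' [Hq /Vp_size [_ H]]] x; have := H x; lia. Qed.

Lemma VA0 k v : VA 0 k v -> v = fun _ => [::].
Proof. by move=> [q' [Hq Hv]]; case: Hv Hq => //= *; lia. Qed.

Lemma VAS q k v : VA q.+1 k v -> v = (fun _ => [::]) \/
  exists b h v', HA q k.+1 h /\ VA q k v' /\ v = fun x => qop b h x :: v' x.
Proof.
move=> [q' [Hq Hv]]; case: Hv Hq => [k'|k' q1 q2 b u h v' Hu Hh Hv'] Hq; first by left.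
right; exists b, h, v'; split; last split => //.
- by exists u; split => //; exists q1; split => //; lia.
- by exists q2; split => //; lia.
Qed.

Definition cd (s : seq bool) : nat := foldr (fun (b : bool) (a : nat) => nat_of_bool b + a.*2) 1 s.

Lemma cd_pos s : 0 < cd s.
Proof. by elim: s => //= b s IH; lia. Qed.

Lemma cd_lt s : cd s < 2 ^ (size s).+1.
Proof. elim: s => //= b s IH; rewrite expnS; have := leq_b1 b; lia. Qed.

Lemma cd_inj s1 : forall s2, cd s1 = cd s2 -> s1 = s2.
Proof.
elim: s1 => [|b1 s1 IH] [|b2 s2] //=.
- by have := cd_pos s2; case: b2; lia.
- by have := cd_pos s1; case: b1; lia.
- rewrite addnC [b2 + _]addnC => H; have [E1 E2] := dg_split H; by rewrite (IH _ E1) E2.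
Qed.

Definition Kc j (u : X -> seq bool) x := key j x + Tk j * cd (u x).

Lemma Kc_inj j u x y : Kc j u x = Kc j u y -> key j x = key j y /\ u x = u y.
Proof.
rewrite /Kc => H.
have Hx := key_lt j x; have Hy := key_lt j y.
have E1 : (cd (u x) * Tk j + key j x) %/ Tk j = (cd (u y) * Tk j + key j y) %/ Tk j.
  by rewrite addnC mulnC H addnC mulnC.
have Tpos : 0 < Tk j by lia.
rewrite !divnMDl // !divn_small // !addn0 in E1.
split; last exact: cd_inj.
by move: H; rewrite E1 => /eqP; rewrite eqn_add2r => /eqP.
Qed.

Lemma Kc_lt j u m x : size (u x) <= m -> Kc j u x < Tk j * 2 ^ m.+1.
Proof.
move=> Hs; rewrite /Kc.
have H1 := key_lt j x.
have H2 : cd (u x) < 2 ^ m.+1.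
  apply: (leq_trans (cd_lt _)); rewrite leq_exp2l //.
have : cd (u x) * Tk j + Tk j <= 2 ^ m.+1 * Tk j.
  by rewrite -mulSnr leq_mul2r H2 orbT.
move: (2 ^ m.+1) (Tk j) (cd (u x)) (key j x) H1 => P T c kk H1' H3.
rewrite [T * c]mulnC [T * P]mulnC; lia.
Qed.

Lemma odd_shift i b R c : c < R -> odd ((i + b * 2 ^ R) %/ 2 ^ c) = odd (i %/ 2 ^ c).
Proof.
move=> Hc.
have -> : i + b * 2 ^ R = (b * 2 ^ (R - c)) * 2 ^ c + i.
  rewrite -mulnA -expnD subnK; [by rewrite addnC | lia].
rewrite divnMDl ?expn_gt0 // oddD oddM oddX /=.
have -> : (R - c == 0) = false by lia.
by rewrite andbF.
Qed.

Lemma factor_enum j u h : factors2 j u h ->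
  forall R, exists i, i < 2 ^ R /\ forall x, Kc j u x < R -> odd (i %/ 2 ^ (Kc j u x)) = h x.
Proof.
move=> Hf; elim=> [|R [i [Hi IH]]].
  by exists 0; split => // x; rewrite ltn0.
case: (classic (exists x0, Kc j u x0 = R)) => [[x0 Hx0]|Hno].
- exists (i + h x0 * 2 ^ R); split.
    rewrite expnS; have := leq_b1 (h x0); nia.
  move=> x; rewrite ltnS leq_eqVlt => /orP [/eqP Ex|Hlt].
  + rewrite Ex addnC divnMDl ?expn_gt0 // divn_small // addn0.
    have [E1 E2] : key j x = key j x0 /\ u x = u x0 by apply: Kc_inj; rewrite Ex Hx0.
    by rewrite (Hf x x0 E1 E2); case: (h x0).
  + by rewrite odd_shift // IH.
- exists i; split; first by rewrite expnS; lia.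
  move=> x; rewrite ltnS leq_eqVlt => /orP [/eqP Ex|Hlt]; last exact: IH.
  by exfalso; apply: Hno; exists x.
Qed.

Lemma bnd_HA q j B : bounded (VA q j) B -> bounded (HA q j) (B * 2 ^ (Tk j * 2 ^ q.+1)).
Proof.
move=> [eu Hu].
exists (fun i => fun x => odd ((i %/ B) %/ 2 ^ (Kc j (eu (i %% B)) x))).
move=> h [u [HVA Hf]].
have [i1 [Hi1 Ei1]] := Hu u HVA.
have [i2 [Hi2 Ei2]] := factor_enum Hf (Tk j * 2 ^ q.+1).
exists (i2 * B + i1); split; first nia.
have Bpos : 0 < B by lia.
rewrite modnMDl modn_small // divnMDl // divn_small // addn0 Ei1.
apply: functional_extensionality => x; apply: Ei2; apply: Kc_lt; exact: VA_size HVA x.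
Qed.

Fixpoint BVA (q k : nat) : nat :=
  match q with
  | 0 => 1
  | q'.+1 => 1 + 2 * (BVA q' k.+1 * 2 ^ (Tk k.+1 * 2 ^ q'.+1) * BVA q' k)
  end.

Lemma bnd_VA q : forall k, bounded (VA q k) (BVA q k).
Proof.
elim: q => [|q IH] k.
  exists (fun _ _ => [::]) => v /VA0 ->; by exists 0.
have Hc := bnd_prod bnd_bool (bnd_prod (bnd_HA (IH k.+1)) (IH k)).
have Hc' := bnd_img (F := fun z : bool * ((X -> bool) * (X -> seq bool)) =>
   fun x => qop z.1 z.2.1 x :: z.2.2 x)
   (Q := fun v => exists b h v', HA q k.+1 h /\ VA q k v' /\ v = fun x => qop b h x :: v' x) Hc.
have H1 : bounded (fun v : X -> seq bool => v = fun _ => [::]) 1.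
  by exists (fun _ _ => [::]) => v ->; exists 0.
have Himg : forall v, (exists b h v', HA q k.+1 h /\ VA q k v' /\ v = fun x => qop b h x :: v' x) ->
  exists z, ((fun _ : bool => True) z.1 /\ (HA q k.+1 z.2.1 /\ VA q k z.2.2)) /\
    (fun x => qop z.1 z.2.1 x :: z.2.2 x) = v.
  move=> v [b [h [v' [Hh [Hv' ->]]]]]; by exists (b, (h, v')).
have [e He] := bnd_or H1 (Hc' Himg).
exists e => v /VAS Hv; have [i [Hi Ei]] := He v Hv; by exists i; split.
Qed.

End Count.

Lemma Tk_pos k : 0 < Tk k.
Proof. by rewrite /Tk expn_gt0 /Mk; lia. Qed.

Lemma Tk_mono k : Tk k <= Tk k.+1.
Proof.
rewrite /Tk; apply: (leq_trans (n := Mk k.+1 ^ k.+2)).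
  by rewrite leq_exp2r // /Mk; lia.
by rewrite leq_pexp2l // /Mk; lia.
Qed.

Lemma Tk_le k k' : k <= k' -> Tk k <= Tk k'.
Proof.
move=> H; rewrite -(subnK H); elim: (k' - k) => // d IH.
by rewrite addSn; apply: leq_trans IH (Tk_mono _).
Qed.

Lemma BVA_le q : forall k, BVA q k <= 2 ^ (2 * 4 ^ q * Tk (k + q)).
Proof.
elim: q => [|q IH] k /=; first by rewrite expn_gt0.
set T' := Tk (k + q.+1).
have HT1 : Tk (k.+1 + q) <= T' by rewrite addSnnS.
have HT2 : Tk (k + q) <= T' by apply: Tk_le; lia.
have HT3 : Tk k.+1 <= T' by apply: Tk_le; lia.
have HTp : 0 < T' := Tk_pos _.
set E0 := 2 * 4 ^ q * T'.
have HA : BVA q k.+1 <= 2 ^ E0.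
  apply: (leq_trans (IH k.+1)); rewrite leq_exp2l //; rewrite /E0; exact: leq_mul.
have HC : BVA q k <= 2 ^ E0.
  apply: (leq_trans (IH k)); rewrite leq_exp2l //; rewrite /E0; exact: leq_mul.
have HB : 2 ^ (Tk k.+1 * 2 ^ q.+1) <= 2 ^ (T' * 2 ^ q.+1).
  by rewrite leq_exp2l // leq_mul2r HT3 orbT.
have Hprod : BVA q k.+1 * 2 ^ (Tk k.+1 * 2 ^ q.+1) * BVA q k <= 2 ^ (E0 + T' * 2 ^ q.+1 + E0).
  by rewrite !expnD; apply: leq_mul => //; apply: leq_mul.
apply: (leq_trans (n := 2 ^ (E0 + T' * 2 ^ q.+1 + E0).+2)).
  have := expn_gt0 2 (E0 + T' * 2 ^ q.+1 + E0).
  have -> : 2 ^ (E0 + T' * 2 ^ q.+1 + E0).+2 = 4 * 2 ^ (E0 + T' * 2 ^ q.+1 + E0) by rewrite !expnS mulnA.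
  move: (2 ^ (E0 + T' * 2 ^ q.+1 + E0)) (BVA q k.+1 * 2 ^ (Tk k.+1 * 2 ^ q.+1) * BVA q k) Hprod.
  move=> P Y HY HP; lia.
rewrite leq_exp2l // /E0 !expnS.
have H4 : 2 ^ q <= 4 ^ q by rewrite -[4]/(2 * 2) expnMn leq_pmulr ?expn_gt0.
have := expn_gt0 2 q; move: (2 ^ q) (4 ^ q) H4 => P F H4 HP; nia.
Qed.

Definition BT q := BVA q 0 * 2 ^ (Tk 0 * 2 ^ q.+1).

Lemma BT_le q : BT q <= 2 ^ (4 ^ q.+1 * Tk q).
Proof.
rewrite /BT; apply: (leq_trans (n := 2 ^ (2 * 4 ^ q * Tk q) * 2 ^ (Tk q * 2 ^ q.+1))).
  apply: leq_mul; first exact: BVA_le.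
  by rewrite leq_exp2l // leq_mul2r Tk_le ?orbT.
rewrite -expnD leq_exp2l // !expnS.
have H4 : 2 ^ q <= 4 ^ q by rewrite -[4]/(2 * 2) expnMn leq_pmulr ?expn_gt0.
nia.
Qed.

Lemma sq_lt_pow L : 5 <= L -> L * L < 2 ^ L.
Proof.
elim: L => // L IH; rewrite leq_eqVlt => /orP [/eqP <-|H] //.
have := IH H; rewrite expnS; nia.
Qed.

Lemma arith n Q : 2 ^ 512 <= n -> Q * trunc_log 2 n <= n ->
  4 ^ Q.+1 * Tk Q < (2 ^ n).-1.
Proof.
move=> Hn HQ; set L := trunc_log 2 n.
have npos : 0 < n by apply: leq_trans Hn; rewrite expn_gt0.
have HL1 : 2 ^ L <= n by apply: trunc_logP.
have HL2 : n < 2 ^ L.+1 by apply: trunc_log_ltn.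
have HL : 512 <= L by apply: trunc_log_max.
(* Q < 2 ^ (L - 8) *)
have EL : 2 ^ L.+1 = 2 ^ 9 * 2 ^ (L - 8) by rewrite -expnD; congr (_ ^ _); lia.
have HP : 2 <= 2 ^ (L - 8).
  by rewrite -{1}(expn1 2) leq_exp2l //; lia.
have EL6 : 2 ^ (L - 6) = 4 * 2 ^ (L - 8) by rewrite -[4]/(2 ^ 2) -expnD; congr (_ ^ _); lia.
have HQ2 : Mk Q <= 2 ^ (L - 6).
  rewrite /Mk EL6; move: HQ HL2; rewrite EL; nia.
have HT : Tk Q <= 2 ^ ((L - 6) * Q.+2).
  by rewrite /Tk expnM leq_exp2r.
have H4 : 4 ^ Q.+1 = 2 ^ (Q.+1).*2 by rewrite -[4]/(2 ^ 2) -expnM; congr (_ ^ _); lia.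
have Hexp : (Q.+1).*2 + (L - 6) * Q.+2 <= n.-1.
  case: (leqP Q L) => HQL.
  - have : L * L < n by apply: leq_trans (sq_lt_pow _) HL1; lia.
    nia.
  - nia.
apply: (leq_trans (n := (2 ^ n.-1).+1)); last first.
  have E : 2 ^ n = 2 * 2 ^ n.-1 by rewrite -expnS prednK.
  have H2 : 2 <= 2 ^ n.-1.
    rewrite -{1}(expn1 2) leq_exp2l //; have : 2 ^ 512 <= n := Hn.
    have : 2 <= 2 ^ 512 by rewrite -{1}(expn1 2) leq_exp2l.
    lia.
  rewrite E; move: (2 ^ n.-1) H2 => P H2; lia.
rewrite ltnS H4; apply: (leq_trans (n := 2 ^ ((Q.+1).*2) * 2 ^ ((L - 6) * Q.+2))).
  by rewrite leq_mul2l HT orbT.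
by rewrite -expnD leq_exp2l.
Qed.

From Stdlib Require Import Reals Lra.

Lemma expn_pow m k : expn m k = Nat.pow m k.
Proof. elim: k => // k IH; rewrite expnS IH mulnE. by []. Qed.

Lemma real_step n L q : 0 < L -> expn 2 L <= n ->
  (INR q < INR n / log2R (INR n))%R -> q * L < n.
Proof.
move=> HL HLn Hq.
have ln2 : (0 < ln 2)%R by rewrite -ln_1; apply: ln_increasing; lra.
have Hn2 : (INR (expn 2 L) <= INR n)%R by apply: le_INR; apply/leP.
rewrite expn_pow pow_INR in Hn2.
have H2L : (0 < INR 2 ^ L)%R by apply: pow_lt; simpl; lra.
have HlnL : (INR L * ln 2 <= ln (INR n))%R.
  have E : ln (INR 2 ^ L) = (INR L * ln 2)%R by rewrite ln_pow //; simpl; lra.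
  rewrite -E; case: (Rle_lt_or_eq_dec _ _ Hn2) => [Hlt|->]; last by apply: Rle_refl.
  by apply: Rlt_le; apply: ln_increasing.
have HLpos : (1 <= INR L)%R by apply: (le_INR 1); apply/leP.
have Hlog : (INR L <= log2R (INR n))%R.
  rewrite /log2R; apply: (Rmult_le_reg_r (ln 2)) => //.
  rewrite /Rdiv Rmult_assoc Rinv_l; lra.
have Hlogpos : (0 < log2R (INR n))%R by lra.
have Hq' : (INR q * log2R (INR n) < INR n)%R.
  have := Rmult_lt_compat_r _ _ _ Hlogpos Hq.
  by rewrite /Rdiv Rmult_assoc Rinv_l; lra.
have Hq0 : (0 <= INR q)%R := pos_INR q.
have : (INR (q * L) < INR n)%R.
  rewrite mult_INR; apply: (Rle_lt_trans _ (INR q * log2R (INR n))) => //.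
  by apply: Rmult_le_compat_l.
by move/INR_lt/ltP.
Qed.

Lemma big_card n (Q : nat) (HQ : BT Q + 2 < expn 2 (expn 2 n)) (e : nat -> (n.-tuple bool * seq nat -> bool)) :
  exists A : {set n.-tuple bool}, A != set0 /\ A != setT /\
    forall i, i < BT Q -> A != [set w | e i (w, [::])].
Proof.
set Big := [set [set w | e (nat_of_ord i) (w, [::])] | i : 'I_(BT Q)] :|: [set set0; setT].
have Hc : #|Big| <= BT Q + 2.
  apply: (leq_trans (leq_card_setU _ _)); apply: leq_add.
    by apply: (leq_trans (leq_imset_card _ _)); rewrite card_ord.
  by rewrite cards2; case: (_ != _).
have Hp : #|powerset [set: n.-tuple bool]| = expn 2 (expn 2 n).
  by rewrite card_powerset cardsT card_tuple card_bool.
have : ~~ (powerset [set: n.-tuple bool] \subset Big).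
  apply/negP => /subset_leq_card; rewrite Hp => H.
  move: HQ Hc H; move: (expn 2 (expn 2 n)) (BT Q) (#|Big|) => P B C; lia.
case/subsetPn => A _ HA; exists A.
split; first by apply/negP => /eqP E; move: HA; rewrite E !inE eqxx orbT.
split; first by apply/negP => /eqP E; move: HA; rewrite E !inE eqxx !orbT.
move=> i Hi; apply/negP => /eqP E; move: HA; rewrite inE negb_or => /andP [H _].
move: H; rewrite E; apply/negP; apply/negPn.
by apply/imsetP; exists (Ordinal Hi).
Qed.

Theorem mainTheorem20 :
  exists N : nat, forall n : nat, N <= n ->
    exists A : {set n.-tuple bool},
      A != set0 /\ A != setT /\
      forall phi : formula, defines A phi ->
        (INR n / log2R (INR n) <= INR (nquant phi))%R.
Proof.
exists (expn 2 512) => n Hn.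
set L := trunc_log 2 n.
have npos : 0 < n by apply: leq_trans Hn; rewrite expn_gt0.
have HL1 : expn 2 L <= n by apply: trunc_logP.
have HL : 512 <= L by apply: trunc_log_max.
set Q := n %/ L.
have HQL : Q * L <= n by apply: leq_divM.
have Har := arith Hn HQL.
have HBT : BT Q + 2 < expn 2 (expn 2 n).
  set E := expn 4 Q.+1 * Tk Q.
  have HE : 0 < E by rewrite /E muln_gt0 expn_gt0 Tk_pos.
  apply: (leq_trans (n := (expn 2 E).*2.+1)).
    have H2E : 2 <= expn 2 E by rewrite -{1}(expn1 2) leq_exp2l.
    have := BT_le Q; rewrite -/E; move: (expn 2 E) H2E => P H2E; lia.
  have : expn 2 E.+1 <= expn 2 (expn 2 n).-1 by rewrite leq_exp2l //; lia.
  have H2 : 0 < expn 2 n by rewrite expn_gt0.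
  have -> : expn 2 (expn 2 n) = 2 * expn 2 (expn 2 n).-1 by rewrite -expnS prednK.
  have := expn_gt0 2 E; rewrite expnS; move: (expn 2 E) (expn 2 (expn 2 n).-1) => P P1; lia.
have [e He] := bnd_HA (bnd_VA n Q 0).
have [A [HA0 [HAT HAe]]] := big_card HBT e.
exists A; split => //; split => // phi [_ [Hin Hout]].
case: (Rle_lt_dec (INR n / log2R (INR n)) (INR (nquant phi))) => // Hlt.
exfalso.
have HqL := real_step (leq_trans (isT : 0 < 512) HL) HL1 Hlt.
have Hq : nquant phi <= Q by rewrite leq_divRL; [lia | lia].
have [q' [v [Hq' [Hv Hf]]]] := den_D n phi [::].
have HHA : HA Q 0 (den (n:=n) [::] phi).
  exists v; split => //; exists q'; split => //; lia.
have [i [Hi Ei]] := He _ HHA.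
have := HAe i Hi; apply/negP; apply/negPn; apply/eqP/setP => w.
rewrite inE Ei /den /=.
case: (boolP (w \in A)) => Hw.
- by symmetry; apply/satP; apply: Hin.
- apply/esym/negbTE/negP => /satP H; exact: (Hout w Hw H).
Qed.
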